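(* Let $\alpha_1,\alpha_2,\beta_1,\beta_2$ be positive constants, and let $\{a_k\}_{k\ge0}$, $\{b_k\}_{k\ge1}$ be non-negative sequences with $a_{k+1}\le\alpha_1a_k^2+\alpha_2$ for all $k\ge0$ and $b_{k+1}\le\beta_1b_k+\beta_2b_k^2$ for all $k\ge1$. Assume $\alpha_2\le\frac1{4\alpha_1}$ and $\beta_1<1$. If $a_0=0$ and $b_1\le\frac{\gamma-\beta_1}{\beta_2}$ for some $\gamma\in(\beta_1,1)$, then \[ 0\le\sup_{k\ge0}a_k\le2\alpha_2,\qquad \sum_{k=1}^\infty b_k\le\frac{b_1}{1-\gamma}. \] *)

(* Defs.v *)
From Stdlib Require Import Reals.
From Coquelicot Require Export Coquelicot.

(* Main.v *)
Require Import Defs.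
From Stdlib Require Import Reals.
From Coquelicot Require Import Coquelicot.
From Stdlib Require Import Lra Psatz.
Open Scope R_scope.

Theorem lemma4p2 (alpha1 alpha2 beta1 beta2 gamma : R) (a b : nat -> R)
  (Ha1 : 0 < alpha1) (Ha2 : 0 < alpha2) (Hb1 : 0 < beta1) (Hb2 : 0 < beta2)
  (Ha_nn : forall k : nat, 0 <= a k)
  (Hb_nn : forall k : nat, (1 <= k)%nat -> 0 <= b k)
  (Ha_rec : forall k : nat, a (S k) <= alpha1 * (a k)^2 + alpha2)
  (Hb_rec : forall k : nat, (1 <= k)%nat -> b (S k) <= beta1 * b k + beta2 * (b k)^2)
  (Halpha : alpha2 <= 1 / (4 * alpha1))
  (Hbeta : beta1 < 1)
  (Ha0 : a 0%nat = 0)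
  (Hgamma : beta1 < gamma /\ gamma < 1)
  (Hb1bound : b 1%nat <= (gamma - beta1) / beta2) :
  Rbar_le (Finite 0) (Sup_seq a) /\ Rbar_le (Sup_seq a) (Finite (2 * alpha2)) /\
  ex_series (fun k => b (S k)) /\
  Series (fun k => b (S k)) <= b 1%nat / (1 - gamma).
Proof.
  destruct Hgamma as [Hg1 Hg2].
  assert (H4 : 4 * alpha1 * alpha2 <= 1).
  { apply Rmult_le_compat_l with (r := 4 * alpha1) in Halpha; [|lra].
    unfold Rdiv in Halpha. rewrite Rmult_1_l, Rinv_r in Halpha; lra. }
  assert (Ha : forall k, a k <= 2 * alpha2).
  { induction k. rewrite Ha0; lra.
    pose proof (Ha_rec k). pose proof (Ha_nn k).
    assert (a k ^ 2 <= (2*alpha2)^2) by (apply pow_incr; lra).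
    assert (alpha1 * a k ^ 2 <= alpha1 * (2*alpha2)^2) by (apply Rmult_le_compat_l; lra).
    nra. }
  set (c := (gamma - beta1) / beta2).
  assert (Hc : beta2 * c = gamma - beta1) by (unfold c; field; lra).
  assert (Hb : forall k, 0 <= b (S k) <= gamma ^ k * b 1%nat /\ b (S k) <= c).
  { induction k.
    - simpl. split; [split|]; try lra. apply Hb_nn; lia. fold c in Hb1bound; lra.
    - destruct IHk as [[H0 H1] H2].
      pose proof (Hb_rec (S k) ltac:(lia)).
      pose proof (Hb_nn (S (S k)) ltac:(lia)).
      assert (Hs : b (S (S k)) <= gamma * b (S k)).
      { assert (beta2 * b (S k) ^ 2 <= beta2 * c * b (S k)).
        { rewrite Rmult_assoc. apply Rmult_le_compat_l; [lra|]. simpl. nra. }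
        nra. }
      simpl. split; [split|]; try lra.
      + assert (gamma * b (S k) <= gamma * (gamma ^ k * b 1%nat)) by (apply Rmult_le_compat_l; lra).
        lra.
      + nra. }
  assert (Hgeo : is_series (fun n => b 1%nat * gamma ^ n) (b 1%nat * / (1 - gamma))).
  { apply (is_series_scal_l (b 1%nat) (fun n => gamma ^ n)). apply is_series_geom.
    rewrite Rabs_pos_eq; lra. }
  assert (Hex : ex_series (fun k => b (S k))).
  { apply (@ex_series_le R_AbsRing R_CompleteNormedModule _ (fun n => b 1%nat * gamma ^ n)).
    - intros n. destruct (Hb n) as [[H0 H1] _]. change norm with Rabs.
      rewrite Rabs_pos_eq; lra.
    - eexists; exact Hgeo. }
  split; [|split; [|split]].
  - apply Sup_seq_minor_le with (n := 0%nat). simpl. apply Ha_nn.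
  - replace (Finite (2 * alpha2)) with (Sup_seq (fun _ => Finite (2*alpha2))).
    + apply Sup_seq_le. intros n. simpl. apply Ha.
    + apply is_sup_seq_unique. intros eps. pose proof (cond_pos eps). split.
      * intros n. simpl. lra.
      * exists 0%nat. simpl. lra.
  - exact Hex.
  - eapply Rle_trans. apply (Series_le _ (fun n => b 1%nat * gamma ^ n)).
    + intros n. destruct (Hb n) as [[H0 H1] _]. lra.
    + eexists; exact Hgeo.
    + rewrite (is_series_unique _ _ Hgeo). unfold Rdiv. lra.
Qed.
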